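(* Let $0<\delta_0<1$ and $B=\max\big(\frac5{\delta_0},\frac1{0.45}\ln\frac5{\delta_0^2}\big)$. There exists $m\in\mathbb{N}$ such that the polynomial \[h_2(x)=1-(1-x)^3\sum_{l=0}^m\frac{(-Bx)^l}{l!}\] has zero constant term and satisfies (i) $h_2'(1)=h_2''(1)=0$; (ii) for all $\Delta\in[-0.55,1/\delta_0^2]$, $|h_2(1+\Delta)-1|\le\frac{\delta_0^2|\Delta|}{5}$; (iii) for all $\Delta\in[-1,-0.55]$, $0\le h_2(1+\Delta)\le1$. *)

(* Defs.v *)
From Stdlib Require Import Reals Arith Factorial.
Open Scope R_scope.

Definition Bconst (d0 : R) : R := Rmax (5 / d0) (/ (45/100) * ln (5 / d0 ^ 2)).

(* h2(x) = 1 - (1-x)^3 * sum_{l=0}^m (-B x)^l / l!   (sum_f_R0 f m = f 0 + ... + f m) *)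
Definition h2 (B : R) (m : nat) (x : R) : R :=
  1 - (1 - x) ^ 3 * sum_f_R0 (fun l => (- B * x) ^ l / INR (fact l)) m.

(* Main.v *)
Require Import Defs.
From Stdlib Require Import Reals Lra Lia Psatz Factorial.
From Coquelicot Require Import Coquelicot.
Open Scope R_scope.

Definition E (m : nat) (y : R) : R := sum_f_R0 (fun l => y ^ l / INR (fact l)) m.

Lemma ex_derive_n_exp : forall k t, ex_derive_n exp k t.
Proof.
  intros [|k] t; simpl; [exact I|].
  apply ex_derive_ext with exp.
  - intros u. symmetry. apply is_derive_n_unique, is_derive_n_exp.
  - exists (exp t). apply is_derive_Reals, derivable_pt_lim_exp.
Qed.

Lemma Dn_expopp k t : Derive_n (fun y => exp (- y)) k t = (-1) ^ k * exp (- t).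
Proof.
  rewrite Derive_n_comp_opp.
  - rewrite (is_derive_n_unique _ _ _ _ (is_derive_n_exp k (-t))). reflexivity.
  - apply filter_forall. intros; apply ex_derive_n_exp.
Qed.

Lemma exdn_expopp k t : ex_derive_n (fun y => exp (- y)) k t.
Proof.
  destruct k as [|k]; simpl; [exact I|].
  apply ex_derive_ext with (fun u => (-1) ^ k * exp (- u)).
  - intros u. symmetry. apply Dn_expopp.
  - auto_derive. exact I.
Qed.

Lemma taylor_neg m z : 0 < z -> exists zeta, 0 < zeta < z /\
  exp (- z) = E m (- z) + (- z) ^ (S m) / INR (fact (S m)) * exp (- zeta).
Proof.
  intros hz.
  destruct (Taylor_Lagrange (fun t => exp (- t)) m 0 z hz
     (fun t _ k _ => exdn_expopp k t)) as [zeta [Hz Heq]].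
  exists zeta; split; [exact Hz|].
  cbv beta in Heq. rewrite Heq. unfold E. f_equal.
  - apply sum_eq. intros i _. rewrite Dn_expopp, Ropp_0, exp_0, Rminus_0_r.
    replace (- z) with ((-1) * z) by ring. rewrite Rpow_mult_distr.
    field. apply INR_fact_neq_0.
  - rewrite Dn_expopp, Rminus_0_r.
    replace (- z) with ((-1) * z) by ring. rewrite Rpow_mult_distr.
    field. apply INR_fact_neq_0.
Qed.

Lemma E_0 m : E m 0 = 1.
Proof.
  induction m.
  - unfold E; simpl. field.
  - change (E (S m) 0) with (E m 0 + 0 ^ (S m) / INR (fact (S m))).
    rewrite IHm, pow_ne_zero by lia. unfold Rdiv. ring.
Qed.

Lemma E_bounds k z : 0 <= z ->
  exp (- z) <= E (2 * k) (- z) <= exp (- z) + z ^ (S (2 * k)) / INR (fact (S (2 * k))).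
Proof.
  intros hz. destruct (Req_dec z 0) as [->|hz'].
  - rewrite Ropp_0, E_0, exp_0. split; [lra|].
    rewrite pow_ne_zero by lia. unfold Rdiv. lra.
  - destruct (taylor_neg (2 * k) z ltac:(lra)) as [zeta [Hz Heq]].
    assert (Hp : (- z) ^ S (2 * k) = - z ^ S (2 * k)).
    { replace (- z) with ((-1) * z) by ring. rewrite Rpow_mult_distr, pow_1_odd. ring. }
    rewrite Hp in Heq.
    assert (0 < exp (- zeta) < 1).
    { split. apply exp_pos. rewrite <- exp_0. apply exp_increasing. lra. }
    assert (0 < z ^ S (2 * k) / INR (fact (S (2 * k)))).
    { apply Rdiv_lt_0_compat. apply pow_lt; lra. apply INR_fact_lt_0. }
    split; nra.
Qed.
Definition Sf (B : R) (m : nat) (x : R) : R := E m (- B * x).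
Definition Sd (B : R) (m : nat) (x : R) : R :=
  match m with O => 0 | S k => - B * Sf B k x end.

Lemma h2_Sf B m x : h2 B m x = 1 - (1 - x) ^ 3 * Sf B m x.
Proof. reflexivity. Qed.

Lemma dSf B m x : is_derive (Sf B m) x (Sd B m x).
Proof.
  induction m.
  - apply is_derive_ext with (fun _ => 1).
    + intros; unfold Sf, E; simpl; field.
    + simpl. auto_derive; [exact I|ring].
  - apply is_derive_ext with (fun x => Sf B m x + (- B * x) ^ (S m) / INR (fact (S m))).
    + intros; reflexivity.
    + replace (Sd B (S m) x) with (Sd B m x + (INR (S m) * (- B * x) ^ m * (- B)) / INR (fact (S m))).
      * auto_derive. { eexists; exact IHm. }
        change (fact m + m * fact m)%nat with (fact (S m)).
        change (match m with 0%nat => 1 | S _ => INR m + 1 end) with (INR (S m)).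
        change (fun x0 : R => Sf B m x0) with (Sf B m).
        rewrite (is_derive_unique _ _ _ IHm). field. apply INR_fact_neq_0.
      * destruct m as [|j].
        -- simpl. unfold Sf, E. simpl. field.
        -- simpl Sd. change (Sf B (S j) x) with (Sf B j x + (- B * x) ^ (S j) / INR (fact (S j))).
           rewrite (fact_simpl (S j)), mult_INR.
           field. split; [apply INR_fact_neq_0| apply not_0_INR; lia].
Qed.

Lemma exSd B m x : ex_derive (Sd B m) x.
Proof.
  destruct m as [|k].
  - apply ex_derive_ext with (fun _ => 0). intros; reflexivity. auto_derive; exact I.
  - apply ex_derive_ext with (fun x => - B * Sf B k x). intros; reflexivity.
    auto_derive. eexists; apply dSf.
Qed.

Lemma pow_le_one x n : 0 <= x <= 1 -> x ^ n <= 1.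
Proof.
  intros H; induction n; simpl; [lra|].
  assert (0 <= x ^ n) by (apply pow_le; lra). nra.
Qed.

Lemma exp_le_m x y : x <= y -> exp x <= exp y.
Proof.
  intros H; destruct (Rle_lt_or_eq_dec _ _ H) as [H'|H'].
  - left; apply exp_increasing; exact H'.
  - subst; right; reflexivity.
Qed.

Theorem lemma4p8 (d0 : R) (hd0 : 0 < d0) (hd1 : d0 < 1) :
  exists m : nat,
    (* zero constant term of the polynomial h2 *)
    h2 (Bconst d0) m 0 = 0 /\
    (* (i) h2'(1) = h2''(1) = 0 : d1 is the derivative of h2 everywhere *)
    (exists d1 : R -> R,
        (forall x, derivable_pt_lim (h2 (Bconst d0) m) x (d1 x)) /\
        d1 1 = 0 /\ derivable_pt_lim d1 1 0) /\
    (* (ii) *)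
    (forall D : R, - (55/100) <= D <= 1 / d0 ^ 2 ->
        Rabs (h2 (Bconst d0) m (1 + D) - 1) <= d0 ^ 2 * Rabs D / 5) /\
    (* (iii) *)
    (forall D : R, -1 <= D <= - (55/100) ->
        0 <= h2 (Bconst d0) m (1 + D) <= 1).
Proof.
  set (B := Bconst d0).
  assert (HB5 : 5 / d0 <= B) by apply Rmax_l.
  assert (HB2 : / (45/100) * ln (5 / d0 ^ 2) <= B) by apply Rmax_r.
  assert (Hd5 : 5 < 5 / d0).
  { assert (5 / d0 * d0 = 5) by (field; lra). nra. }
  assert (HBpos : 5 < B) by lra.
  assert (Hd2 : 0 < d0 ^ 2) by (apply pow_lt; lra).
  assert (Hexp : exp (- (45/100 * B)) <= d0 ^ 2 / 5).
  { assert (Hl : ln (5 / d0 ^ 2) <= 45/100 * B).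
    { replace (ln (5 / d0 ^ 2)) with (45/100 * (/ (45/100) * ln (5 / d0 ^ 2))) by field.
      lra. }
    rewrite exp_Ropp.
    apply exp_le_m in Hl. rewrite exp_ln in Hl.
    2:{ apply Rdiv_lt_0_compat; lra. }
    replace (d0 ^ 2 / 5) with (/ (5 / d0 ^ 2)) by (field; lra).
    apply Rinv_le_contravar; [apply Rdiv_lt_0_compat; lra | exact Hl]. }
  set (Y := B * (1 + 1 / d0 ^ 2)).
  assert (HY : B <= Y).
  { unfold Y. assert (0 < 1 / d0 ^ 2) by (apply Rdiv_lt_0_compat; lra). nra. }
  set (Z := Y + 1).
  set (c := d0 ^ 6 / 10).
  assert (Hc : 0 < c) by (unfold c; assert (0 < d0 ^ 6) by (apply pow_lt; lra); lra).
  assert (Hc1 : c < 1).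
  { unfold c. assert (d0 ^ 6 <= 1) by (apply pow_le_one; lra). lra. }
  destruct (cv_speed_pow_fact Z c Hc) as [N HN].
  exists (2 * N)%nat.
  set (m := (2 * N)%nat).
  assert (HZ : Z ^ (S m) / INR (fact (S m)) < c).
  { specialize (HN (S m) ltac:(unfold m; lia)). unfold R_dist in HN.
    rewrite Rminus_0_r in HN. apply Rabs_def2 in HN. lra. }
  set (F := INR (fact (S m))) in *.
  assert (HF : 0 < F) by apply INR_fact_lt_0.
  assert (HZF : Z ^ S m < c * F).
  { apply (Rmult_lt_compat_r F) in HZ; [|exact HF].
    unfold Rdiv in HZ. rewrite Rmult_assoc, Rinv_l in HZ by lra. lra. }
  assert (Hbnd : forall z, 0 <= z <= Y ->
     0 < exp (- z) <= E m (- z) /\ E m (- z) <= exp (- z) + z ^ S m / F /\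
     z ^ S m / F <= c /\ z ^ S m / F <= z / (1 + z)).
  { intros z Hz.
    destruct (E_bounds N z ltac:(lra)) as [H1 H2].
    fold m in H1, H2. fold F in H2.
    assert (Hzm : z ^ m <= Z ^ m) by (apply pow_incr; unfold Z; lra).
    assert (Hzm0 : 0 <= z ^ m) by (apply pow_le; lra).
    assert (HSm : z ^ S m <= Z ^ S m) by (apply pow_incr; unfold Z; lra).
    split; [split; [apply exp_pos|exact H1]|].
    split; [exact H2|].
    split.
    - apply (Rmult_le_reg_r F); [exact HF|].
      unfold Rdiv. rewrite Rmult_assoc, Rinv_l by lra. lra.
    - assert (Hk : z ^ S m * (1 + z) <= z * F).
      { change (z ^ S m) with (z * z ^ m).
        assert (HZS : Z ^ S m = Z * Z ^ m) by reflexivity.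
        assert (z * z ^ m * (1 + z) <= z * (Z * Z ^ m)).
        { assert (1 + z <= Z) by (unfold Z; lra).
          assert (0 <= Z ^ m) by lra. 
          assert (z ^ m * (1 + z) <= Z ^ m * Z) by nra. nra. }
        rewrite HZS in HZF.
        assert (Z * Z ^ m <= F) by nra.
        assert (z * (Z * Z ^ m) <= z * F) by (apply Rmult_le_compat_l; lra).
        lra. }
      apply (Rmult_le_reg_r (F * (1 + z))); [nra|].
      replace (z ^ S m / F * (F * (1 + z))) with (z ^ S m * (1 + z)) by (field; lra).
      replace (z / (1 + z) * (F * (1 + z))) with (z * F) by (field; lra).
      exact Hk. }
  split; [|split; [|split]].
  -
    rewrite h2_Sf. unfold Sf. rewrite Rmult_0_r, E_0. ring.
  - exists (fun x => 3 * (1 - x) ^ 2 * Sf B m x - (1 - x) ^ 3 * Sd B m x).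
    split; [|split].
    + intros x. apply is_derive_Reals.
      apply is_derive_ext with (fun x => 1 - (1 - x) ^ 3 * Sf B m x).
      { intros; symmetry; apply h2_Sf. }
      auto_derive. { eexists; apply dSf. }
      change (fun x0 : R => Sf B m x0) with (Sf B m).
      rewrite (is_derive_unique _ _ _ (dSf B m x)). ring.
    + ring.
    + apply is_derive_Reals. auto_derive.
      { split; [eexists; apply dSf|split; [apply exSd|exact I]]. }
      ring.
  - intros D HD.
    rewrite h2_Sf. unfold Sf.
    replace (- B * (1 + D)) with (- (B * (1 + D))) by ring.
    set (z := B * (1 + D)).
    assert (Hz : 0 <= z <= Y).
    { unfold z, Y. split; [nra|].
      apply Rmult_le_compat_l; lra. }
    destruct (Hbnd z Hz) as [[He0 He1] [He2 [He3 He4]]].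
    set (Em := E m (- z)) in *.
    replace (1 - (1 - (1 + D)) ^ 3 * Em - 1) with (D ^ 3 * Em) by ring.
    rewrite Rabs_mult, <- RPow_abs, (Rabs_pos_eq Em) by lra.
    assert (Ha : 0 <= Rabs D) by apply Rabs_pos.
    assert (Ha2 : Rabs D ^ 2 = D ^ 2) by apply pow2_abs.
    assert (Hu : D ^ 2 <= (1 / d0 ^ 2) ^ 2).
    { destruct (Rle_or_lt D 0).
      - assert (1 <= 1 / d0 ^ 2).
        { assert (d0 ^ 2 <= 1) by (apply pow_le_one; lra).
          apply (Rmult_le_reg_r (d0 ^ 2)); [lra|].
          replace (1 / d0 ^ 2 * d0 ^ 2) with 1 by (field; lra). lra. }
        nra.
      - assert (0 <= D) by lra. nra. }
    assert (Huc : (1 / d0 ^ 2) ^ 2 * c = d0 ^ 2 / 10) by (unfold c; field; lra).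
    assert (Hmain : D ^ 2 * exp (- z) <= d0 ^ 2 / 10).
    { destruct (Rle_or_lt D 0).
      - assert (exp (- z) <= exp (- (45/100 * B))).
        { apply exp_le_m. unfold z. nra. }
        assert (D ^ 2 <= 1/2) by nra.
        assert (0 <= D ^ 2) by nra. nra.
      - assert (Hs : exp (- z) = exp (- (45/100 * B)) * exp (- (B * (55/100 + D)))).
        { rewrite <- exp_plus. apply f_equal. unfold z. lra. }
        assert (Hs2 : exp (- (B * (55/100 + D))) <= exp (- (B * D))).
        { apply exp_le_m. nra. }
        assert (Hq : exp (B * D) = exp (B * D / 2) * exp (B * D / 2)).
        { rewrite <- exp_plus. apply f_equal. field. }
        assert (H1 : 1 + B * D / 2 <= exp (B * D / 2)) by apply exp_ineq1_le.
        assert (H2 : 0 <= B * D) by nra.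
        assert (H3 : (B * D / 2) ^ 2 <= exp (B * D)).
        { rewrite Hq.
          assert ((1 + B * D / 2) * (1 + B * D / 2) <= exp (B * D / 2) * exp (B * D / 2)).
          { apply Rmult_le_compat; lra. }
          nra. }
        assert (H4 : 625/100 * D ^ 2 <= exp (B * D)).
        { assert (25 <= B * B) by nra.
          assert (25 * D ^ 2 <= B * B * D ^ 2) by (apply Rmult_le_compat_r; nra).
          replace ((B * D / 2) ^ 2) with (B * B * D ^ 2 / 4) in H3 by field.
          lra. }
        assert (H5 : exp (- (B * D)) * exp (B * D) = 1).
        { rewrite <- exp_plus. replace (- (B * D) + B * D) with 0 by ring. apply exp_0. }
        assert (H6 : D ^ 2 * exp (- (B * D)) <= 16/100).
        { assert (0 < exp (- (B * D))) by apply exp_pos. nra. }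
        rewrite Hs.
        assert (0 < exp (- (B * (55 / 100 + D)))) by apply exp_pos.
        assert (0 < exp (- (45 / 100 * B))) by apply exp_pos.
        assert (D ^ 2 * exp (- (B * (55 / 100 + D))) <= 16/100).
        { assert (0 <= D ^ 2) by nra. nra. }
        nra. }
    assert (Hsq : D ^ 2 * Em <= d0 ^ 2 / 5).
    { assert (0 <= D ^ 2) by nra.
      assert (D ^ 2 * (z ^ S m / F) <= (1 / d0 ^ 2) ^ 2 * c).
      { assert (0 <= z ^ S m / F).
        { apply Rdiv_le_0_compat; [apply pow_le; lra | lra]. }
        apply Rmult_le_compat; lra. }
      nra. }
    replace (Rabs D ^ 3) with (Rabs D * Rabs D ^ 2) by ring.
    rewrite Ha2. nra.
  - intros D HD.
    rewrite h2_Sf. unfold Sf.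
    replace (- B * (1 + D)) with (- (B * (1 + D))) by ring.
    set (z := B * (1 + D)).
    assert (Hz : 0 <= z <= Y).
    { assert (0 < 1 / d0 ^ 2) by (apply Rdiv_lt_0_compat; lra).
      unfold z, Y. split; [apply Rmult_le_pos; lra|].
      apply Rmult_le_compat_l; lra. }
    destruct (Hbnd z Hz) as [[He0 He1] [He2 [He3 He4]]].
    set (Em := E m (- z)) in *.
    assert (Hp : 0 <= (1 - (1 + D)) ^ 3 <= 1).
    { replace (1 - (1 + D)) with (- D) by ring.
      split; [apply pow_le; lra | apply pow_le_one; lra]. }
    assert (HE1 : Em <= 1).
    { assert (H1 : 1 + z <= exp z) by apply exp_ineq1_le.
      assert (H5 : exp (- z) * exp z = 1).
      { rewrite <- exp_plus. replace (- z + z) with 0 by ring. apply exp_0. }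
      assert (exp (- z) <= 1 / (1 + z)).
      { apply (Rmult_le_reg_r (1 + z)); [lra|].
        replace (1 / (1 + z) * (1 + z)) with 1 by (field; lra). nra. }
      assert (1 / (1 + z) + z / (1 + z) = 1) by (field; lra).
      lra. }
    split; nra.
Qed.
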